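(* Let $a>0$, $\beta>0$, let $\lambda$ be feasible, let $0<\xi<a/2$, let $\rho\in\mathcal{P}$, and suppose $d_0\ge\tau(\beta)a$. Then $\lim_{\delta\to0^+}T_2=0$, where \[ T_2=C_5\,\delta\,(\lambda^2\delta^{2\beta}+4)\int_0^{k_0(\delta)}\mathrm{e}^{-2k(d_0-3a)}\mathrm{e}^{-4ka}\left(\frac{\mathrm{e}^{2k\xi}-1}{k}\right)\mathrm{d}k,\qquad C_5=\frac{(d_1-d_0)\|\rho\|^2_{L^2(\mathcal{M})}}{9\pi}. \]
   Context: For $0<\delta<1$ and constants $\beta>0$, $\lambda\in\mathbb{R}$, put $\mu=\delta+\lambda\delta^{\beta}$. The constant $\lambda$ is feasible if $\lambda>0$ when $0<\beta<1$, $\lambda\ge-1$ when $\beta=1$, $\lambda\ne0$ when $\beta>1$; $\delta_\mu\in(0,1)$ is a number with $\mu\ge0$ for $0<\delta\le\delta_\mu$. $k_0(\delta)=\frac{1}{2a}\ln\left(\frac{1}{2\delta^2+\lambda\delta^{\beta+1}}\right)$, and $\delta$ ranges over $0<\delta\le\delta_0$, where $0<\delta_0\le\delta_\mu$ is such that $k_0(\delta)>0$ for $0<\delta\le\delta_0$. $\tau(\beta)=\frac{\beta+2}{\beta+1}$ for $0<\beta<1$ and $\tau(\beta)=\frac32$ for $\beta\ge1$. Let $\mathcal{M}=\{(x,y):x>a\}$; $\mathcal{P}$ is the set of real-valued $\rho\in L^2(\mathcal{M})\cap L^\infty(\mathcal{M})$ with compact support in $\mathcal{M}$, $0<|\operatorname{supp}\rho|<\infty$,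 and $\int\!\!\int\rho=0$; $d_0=\min\{x:(x,y)\in\operatorname{supp}\rho\}$, $d_1=\max\{x:(x,y)\in\operatorname{supp}\rho\}$. *)

(* Defs.v *)
From HB Require Import structures.
From mathcomp Require Import all_boot all_order all_algebra.
From mathcomp Require Import all_classical all_reals all_analysis.
Set Implicit Arguments. Unset Strict Implicit. Unset Printing Implicit Defensive.
Import Order.TTheory GRing.Theory Num.Theory.
Import numFieldNormedType.Exports.
Local Open Scope classical_set_scope.
Local Open Scope ring_scope.

Definition leb2 (R : realType) :=
  ((@lebesgue_measure R) \x (@lebesgue_measure R))%E.

Definition feasible (R : realType) (beta lam : R) : Prop :=
  (beta < 1 -> 0 < lam) /\ (beta = 1 -> -1 <= lam) /\ (1 < beta -> lam != 0).

Definition tau (R : realType) (beta : R) : R :=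
  if beta < 1 then (beta + 2) / (beta + 1) else 3 / 2.

Definition k0 (R : realType) (a beta lam delta : R) : R :=
  (2 * a)^-1 * ln ((2 * delta ^+ 2 + lam * delta `^ (beta + 1))^-1).

Definition regionM (R : realType) (a : R) : set (R * R) := [set p | a < p.1].

Definition supp (R : realType) (rho : R * R -> R) : set (R * R) :=
  closure [set p | rho p != 0].

Definition inP (R : realType) (a : R) (rho : R * R -> R) : Prop :=
  [/\ measurable_fun setT rho /\
        ((@leb2 R)).-integrable setT (fun p => ((rho p) ^+ 2)%:E),
      (exists Mb : R, {ae (@leb2 R), forall p, `|rho p| <= Mb}),
      compact (supp rho) /\ supp rho `<=` regionM a,
      (0 < (@leb2 R) (supp rho))%E /\ ((@leb2 R) (supp rho) < +oo)%E &
      (\int[(@leb2 R)]_(p in setT) (rho p)%:E = 0)%E].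

Definition d0 (R : realType) (rho : R * R -> R) : R := inf (fst @` supp rho).
Definition d1 (R : realType) (rho : R * R -> R) : R := sup (fst @` supp rho).

Definition L2norm2 (R : realType) (a : R) (rho : R * R -> R) : R :=
  \int[(@leb2 R)]_(p in regionM a) (rho p ^+ 2).

Definition C5 (R : realType) (a : R) (rho : R * R -> R) : R :=
  (d1 rho - d0 rho) * L2norm2 a rho / (9 * pi).

Definition T2 (R : realType) (a beta lam xi : R) (rho : R * R -> R) (delta : R) : R :=
  C5 a rho * delta * (lam ^+ 2 * delta `^ (2 * beta) + 4) *
  \int[@lebesgue_measure R]_(k in `[0, k0 a beta lam delta]%classic)
     (expR (- (2 * k * (d0 rho - 3 * a))) * expR (- (4 * k * a)) *
      ((expR (2 * k * xi) - 1) / k)).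

(* Main.v *)
Require Import Defs.
From HB Require Import structures.
From mathcomp Require Import all_boot all_order all_algebra.
From mathcomp Require Import all_classical all_reals all_analysis.
From mathcomp Require Import ring lra measurable_realfun exponential_distribution.
Import Order.TTheory GRing.Theory Num.Theory.
Import numFieldNormedType.Exports.
Local Open Scope classical_set_scope.
Local Open Scope ring_scope.

Lemma ge0_le_integral_nm d (T : measurableType d) (R : realType)
  (mu : {measure set T -> \bar R}) (D : set T) (f g : T -> \bar R) :
  (forall x, D x -> (0 <= f x)%E) -> (forall x, D x -> (f x <= g x)%E) ->
  (\int[mu]_(x in D) f x <= \int[mu]_(x in D) g x)%E.
Proof.
move=> f0 fg.
rewrite ge0_integralE // [X in (_ <= X)%E]ge0_integralE; last first.
  by move=> x Dx; apply: le_trans (f0 x Dx) (fg x Dx).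
apply: ereal_sup_le => _ [h hf <-]; exists h => // x.
apply: le_trans (hf x) _; rewrite !patchE; case: ifP => // /set_mem Dx.
exact: fg.
Qed.

Lemma Rint_bound (R : realType) (c M x : R) (f : R -> R) : 0 < c -> 0 <= M ->
  (forall k, 0 <= k -> 0 <= f k <= M * exponential_pdf c k) ->
  0 <= \int[@lebesgue_measure R]_(k in `[0, x]%classic) f k <= M.
Proof.
move=> c0 M0 hf.
have Dk k : `[0, x]%classic k -> 0 <= k.
  by rewrite /= in_itv /= => /andP[].
set e := (\int[@lebesgue_measure R]_(k in `[0%R, x]%classic) (f k)%:E)%E.
have e0 : (0 <= e)%E.
  apply: integral_ge0 => k /Dk k0; rewrite lee_fin.
  by case/andP: (hf k k0).
have eM : (e <= M%:E)%E.
  apply: (@le_trans _ _ (\int[@lebesgue_measure R]_(k in `[0%R, x]%classic)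
             (M * exponential_pdf c k)%:E)%E).
    apply: ge0_le_integral_nm => k /Dk k0; rewrite lee_fin.
      by case/andP: (hf k k0).
    by case/andP: (hf k k0).
  apply: (@le_trans _ _ (\int[@lebesgue_measure R]_(k in setT)
             (M * exponential_pdf c k)%:E)%E).
    apply: ge0_subset_integral => //.
    - apply/measurable_EFinP; apply: measurable_funM => //.
      exact: measurable_exponential_pdf.
    - by move=> k _; rewrite lee_fin mulr_ge0 // exponential_pdf_ge0 // ltW.
  under eq_integral do rewrite EFinM.
  rewrite ge0_integralZl_EFin //.
  - by rewrite integral_exponential_pdf // mule1.
  - by move=> k _; rewrite lee_fin exponential_pdf_ge0 // ltW.
  - apply/measurable_EFinP; exact: measurable_exponential_pdf.
rewrite /Rintegral -/e.
move: e e0 eM => [r| |] //=; rewrite !lee_fin => -> ->; by [].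
Qed.
Lemma pw (R : realType) (a d0 xi k : R) : 0 < xi -> 0 < 2 * (d0 - a - xi) -> 0 <= k ->
  0 <= expR (- (2 * k * (d0 - 3 * a))) * expR (- (4 * k * a)) *
      ((expR (2 * k * xi) - 1) / k)
  <= (2 * xi / (2 * (d0 - a - xi))) * exponential_pdf (2 * (d0 - a - xi)) k.
Proof.
set c := 2 * (d0 - a - xi) => xi0 c0 k0.
rewrite exponential_pdfE //.
have E0 := expR_gt0 (2 * k * xi).
have E1 : 1 <= expR (2 * k * xi).
  apply: le_trans (expR_ge1Dx _); rewrite lerDl; apply: mulr_ge0 => //; last exact: ltW.
  by apply: mulr_ge0.
have e1 := expR_gt0 (- (2 * k * (d0 - 3 * a))).
have e2 := expR_gt0 (- (4 * k * a)).
apply/andP; split.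
  apply: mulr_ge0; first by apply: mulr_ge0; apply: ltW.
  by apply: divr_ge0 => //; rewrite subr_ge0.
have [->|kpos] := eqVneq k 0.
  by rewrite invr0 !mulr0; apply: mulr_ge0; [apply: divr_ge0; lra|apply: mulr_ge0; [lra|apply: expR_ge0]].
have kp : 0 < k by rewrite lt_def kpos.
have h : (expR (2 * k * xi) - 1) / k <= 2 * xi * expR (2 * k * xi).
  rewrite ler_pdivrMr //.
  have h1 := expR_ge1Dx (- (2 * k * xi)).
  have h2 : expR (2 * k * xi) * expR (- (2 * k * xi)) = 1.
    by rewrite -expRD subrr expR0.
  nra.
apply: (@le_trans _ _ (expR (- (2 * k * (d0 - 3 * a))) * expR (- (4 * k * a)) *
      (2 * xi * expR (2 * k * xi)))).
  by apply: ler_wpM2l => //; apply: mulr_ge0; apply: ltW.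
have -> : expR (- (2 * k * (d0 - 3 * a))) * expR (- (4 * k * a)) *
      (2 * xi * expR (2 * k * xi)) = 2 * xi * expR (- c * k).
  rewrite mulrCA -!expRD; congr (_ * expR _); rewrite /c; ring.
rewrite mulrA divfK; last lra.
by [].
Qed.

Lemma tau_ge (R : realType) (beta : R) : 0 < beta -> 3 / 2 <= tau beta.
Proof.
move=> b0; rewrite /tau; case: ifP => // b1.
rewrite ler_pdivlMr; last lra.
rewrite mulrAC ler_pdivrMr; last lra.
lra.
Qed.

Lemma lim0 (R : realType) (K : R) : (fun d => K * d) @ 0^'+ --> 0.
Proof.
apply: cvg_at_right_filter.
rewrite -[X in _ --> X](mulr0 K).
apply: cvgMr; exact: cvg_id.
Qed.

Lemma limN (R : realType) (K : R) : (fun d => - (K * d)) @ 0^'+ --> 0.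
Proof.
rewrite -[X in _ --> X]oppr0; apply: cvgN; exact: lim0.
Qed.

Lemma keyb (R : realType) (u d P L I M : R) : 0 <= d -> 0 <= P <= L -> 0 <= I <= M ->
  `|u * d * P * I| <= `|u| * L * M * d.
Proof.
move=> d0 /andP[P0 PL] /andP[I0 IM].
rewrite !normrM (ger0_norm d0) (ger0_norm P0) (ger0_norm I0).
rewrite -!mulrA; apply: ler_wpM2l => //.
have -> : L * (M * d) = d * (L * M) by ring.
apply: ler_wpM2l => //; exact: ler_pM.
Qed.

Theorem lemma5p3 (R : realType) (a beta lam xi : R) (rho : R * R -> R) :
  0 < a -> 0 < beta -> feasible beta lam -> 0 < xi -> xi < a / 2 ->
  inP a rho -> tau beta * a <= d0 rho ->
  T2 a beta lam xi rho delta @[delta --> 0^'+] --> 0.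
Proof.
move=> a0 b0 _ xi0 xia _ hd0.
have ht := @tau_ge R beta b0.
have hd : 3 / 2 * a <= d0 rho.
  by apply: le_trans hd0; rewrite ler_wpM2r // ltW.
have c0 : 0 < 2 * (d0 rho - a - xi) by lra.
set M := 2 * xi / (2 * (d0 rho - a - xi)).
have M0 : 0 <= M by rewrite /M divr_ge0 // ltW // mulr_gt0.
have Ib x := @Rint_bound R _ M x _ c0 M0 (fun k k0 => @pw R a (d0 rho) xi k xi0 c0 k0).
set K := `|C5 a rho| * (lam ^+ 2 + 4) * M.
have K0 : 0 <= K.
  rewrite /K mulr_ge0 // mulr_ge0 //; apply: addr_ge0 => //; exact: sqr_ge0.
apply: (@squeeze_cvgr _ _ _ _ (fun δ => - (K * δ)) (fun δ => K * δ)).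
- near=> δ.
  have δ0 : 0 < δ by near: δ; exact: nbhs_right_gt.
  have δ1 : δ < 1 by near: δ; exact: nbhs_right_lt.
  rewrite -ler_norml /T2.
  set I := (X in _ * X).
  have /andP[I0 IM] := Ib (k0 a beta lam δ).
  have p0 : 0 <= δ `^ (2 * beta) := powR_ge0 _ _.
  have p1 : δ `^ (2 * beta) <= 1.
    rewrite -[X in _ <= X](powRr0 δ); apply: ger_powR; first by rewrite δ0 (ltW δ1).
    by apply: mulr_ge0 => //; exact: ltW.
  have l0 : 0 <= lam ^+ 2 := sqr_ge0 lam.
  have P0 : 0 <= lam ^+ 2 * δ `^ (2 * beta) + 4.
    by apply: addr_ge0 => //; apply: mulr_ge0.
  have P1 : lam ^+ 2 * δ `^ (2 * beta) + 4 <= lam ^+ 2 + 4.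
    by rewrite lerD2r; rewrite -{2}(mulr1 (lam ^+ 2)) ler_wpM2l.
  by rewrite /K; apply: keyb => //; apply/andP; split.
- exact: limN.
- exact: lim0.
Unshelve. all: end_near.
Qed.
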